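(* Let $A\in\mathbb{Z}^{d\times n}$, $\mathbf{b}\in\mathbb{Z}^d$, $\mathbf{c}\in\mathbb{Z}^n$, $\mathbf{u}\in\mathbb{Z}_{\ge0}^n$, and consider the LP $\min\{\mathbf{c}^\top\mathbf{x} : A\mathbf{x}=\mathbf{b},\ \mathbf{0}\le\mathbf{x}\le\mathbf{u},\ \mathbf{x}\in\mathbb{R}^n\}$. Let $m$ be the number of distinct positive values of $-\mathbf{c}^\top\mathbf{z}/\|\mathbf{z}\|_1$ as $\mathbf{z}$ ranges over $\mathcal{C}(A)$. Then from any feasible solution, every sequence of discrete steepest-descent augmentations reaches an optimal solution after at most $n\cdot m$ augmentations.
   Context: The circuits $\mathcal{C}(A)$: for each nonzero $\mathbf{z}\in\ker(A)$ with inclusion-minimal support among nonzero vectors of $\ker(A)$, the line $\mathbb{R}\mathbf{z}$ contains exactly two nonzero integer points closest to the origin; $\mathcal{C}(A)$ is the set of all these vectors. Discrete steepest-descent augmentation (LP): given a feasible $\mathbf{x}_k$, choose $\mathbf{z}\in\mathcal{C}(A)$ maximizing $-\mathbf{c}^\top\mathbf{z}/\|\mathbf{z}\|_1$ among all $\mathbf{z}\in\mathcal{C}(A)$ such that $\mathbf{x}_k+\epsilon\mathbf{z}$ is feasible for some $\epsilon>0$; if this maximum is positive, let $\alpha$ be the largest real number with $\mathbf{x}_k+\alpha\mathbf{z}$ feasible and set $\mathbf{x}_{k+1}:=\mathbf{x}_k+\alpha\mathbf{z}$, otherwise stop. *)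

(* Defs.v *)
From HB Require Import structures.
From mathcomp Require Import all_boot all_order all_algebra.
Set Implicit Arguments. Unset Strict Implicit. Unset Printing Implicit Defensive.
Import Order.TTheory GRing.Theory Num.Theory.
Local Open Scope ring_scope.

Section LP.
Variables (R : realFieldType) (d n : nat).

Definition intmx (A : 'M[int]_(d, n)) : 'M[R]_(d, n) := map_mx (fun a => a%:~R) A.
Definition intcv (k : nat) (v : 'cV[int]_k) : 'cV[R]_k := map_mx (fun a => a%:~R) v.

Definition dotc (c : 'cV[int]_n) (x : 'cV[R]_n) : R := \sum_(i < n) (c i 0)%:~R * x i 0.
Definition norm1 (x : 'cV[R]_n) : R := \sum_(i < n) `|x i 0|.

Definition feasible (A : 'M[int]_(d, n)) (b : 'cV[int]_d) (u : 'cV[int]_n)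
  (x : 'cV[R]_n) : Prop :=
  intmx A *m x = intcv b /\ forall i : 'I_n, 0 <= x i 0 <= (u i 0)%:~R.

Definition optimal A b (c u : 'cV[int]_n) (x : 'cV[R]_n) : Prop :=
  feasible A b u x /\ forall y, feasible A b u y -> dotc c x <= dotc c y.

(* circuits: integer kernel vectors of inclusion-minimal support among the
   nonzero (real) kernel vectors, closest to the origin among the nonzero
   integer points of their line *)
Definition is_circuit (A : 'M[int]_(d, n)) (z : 'cV[int]_n) : Prop :=
  [/\ intmx A *m intcv z = 0, z != 0,
      (forall w : 'cV[R]_n, intmx A *m w = 0 -> w != 0 ->
         (forall i, w i 0 != 0 -> z i 0 != 0) ->
         (forall i, z i 0 != 0 -> w i 0 != 0)) &
      (forall (w : 'cV[int]_n) (t : R), w != 0 ->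
         intcv w = t *: intcv z -> 1 <= `|t|)].

Definition sd_ratio (c z : 'cV[int]_n) : R := - dotc c (intcv z) / norm1 (intcv z).

Definition feas_dir A b u (x : 'cV[R]_n) (z : 'cV[int]_n) : Prop :=
  exists eps : R, 0 < eps /\ feasible A b u (x + eps *: intcv z).

Definition sd_step A b (c u : 'cV[int]_n) (x x' : 'cV[R]_n) : Prop :=
  exists z : 'cV[int]_n,
  [/\ is_circuit A z, feas_dir A b u x z,
      (forall z', is_circuit A z' -> feas_dir A b u x z' -> sd_ratio c z' <= sd_ratio c z),
      0 < sd_ratio c z &
      exists alpha : R,
        [/\ feasible A b u (x + alpha *: intcv z),
            (forall beta, feasible A b u (x + beta *: intcv z) -> beta <= alpha) &
            x' = x + alpha *: intcv z]].

Definition sd_stops A b (c u : 'cV[int]_n) (x : 'cV[R]_n) : Prop :=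
  forall z, is_circuit A z -> feas_dir A b u x z -> sd_ratio c z <= 0.

End LP.

(* Main.v *)
Require Import Defs.
From HB Require Import structures.
From mathcomp Require Import all_boot all_order all_algebra.
From mathcomp Require Import ring lra.
From Stdlib Require Classical_Prop.
From Stdlib Require Import IndefiniteDescription.
Set Implicit Arguments. Unset Strict Implicit. Unset Printing Implicit Defensive.
Import Order.TTheory GRing.Theory Num.Theory.
Local Open Scope ring_scope.

Section Basics.
Variables (R : realFieldType) (n : nat).
Implicit Types (v w g h : 'cV[R]_n).

Lemma fmin (P : pred 'I_n) (F : 'I_n -> R) :
  (exists i, P i) -> exists i0, P i0 /\ forall i, P i -> F i0 <= F i.
Proof. by case=> i Pi; case: (arg_minP F Pi) => j Pj H; exists j. Qed.

Lemma dotcD (c : 'cV[int]_n) v w : dotc c (v + w) = dotc c v + dotc c w.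
Proof. by rewrite /dotc -big_split /=; apply: eq_bigr => i _; rewrite mxE mulrDr. Qed.

Lemma dotcZ (c : 'cV[int]_n) (a : R) v : dotc c (a *: v) = a * dotc c v.
Proof. by rewrite /dotc mulr_sumr; apply: eq_bigr => i _; rewrite mxE mulrCA. Qed.

Lemma dotcN (c : 'cV[int]_n) v : dotc c (- v) = - dotc c v.
Proof. by rewrite -scaleN1r dotcZ mulN1r. Qed.

Lemma dotcB (c : 'cV[int]_n) v w : dotc c (v - w) = dotc c v - dotc c w.
Proof. by rewrite dotcD dotcN. Qed.

Lemma dotc0 (c : 'cV[int]_n) : dotc c (0 : 'cV[R]_n) = 0.
Proof. by rewrite -(scale0r (0 : 'cV[R]_n)) dotcZ mul0r. Qed.

Lemma norm1_ge0 v : 0 <= norm1 v.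
Proof. by apply: sumr_ge0 => i _. Qed.

Lemma norm1Z (a : R) v : norm1 (a *: v) = `|a| * norm1 v.
Proof. by rewrite /norm1 mulr_sumr; apply: eq_bigr => i _; rewrite mxE normrM. Qed.

Lemma norm1_gt0 v : v != 0 -> 0 < norm1 v.
Proof.
move=> nz; rewrite lt_def norm1_ge0 andbT; apply/eqP => h0.
move/eqP: nz; apply; apply/matrixP => i j; rewrite (ord1 j) mxE.
by apply/eqP; rewrite -normr_eq0; apply/eqP; apply: (psumr_eq0P _ h0).
Qed.

Lemma norm1D_le v w : norm1 (v + w) <= norm1 v + norm1 w.
Proof. by rewrite /norm1 -big_split /=; apply: ler_sum => i _; rewrite mxE ler_normD. Qed.

Definition between g h := forall i : 'I_n,
  (0 <= g i 0 <= h i 0) \/ (h i 0 <= g i 0 <= 0).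

Lemma between_norm1 g h : between g h -> norm1 h = norm1 g + norm1 (h - g).
Proof.
move=> bg; rewrite /norm1 -big_split /=; apply: eq_bigr => i _; rewrite !mxE.
case: (bg i) => /andP [h1 h2].
  by rewrite !ger0_norm ?subr_ge0 ?(le_trans h1 h2) //; lra.
by rewrite !ler0_norm ?subr_le0 ?(le_trans h1 h2) //; lra.
Qed.

Lemma between_sub g h : between g h -> between (h - g) h.
Proof.
move=> bg i; rewrite !mxE; case: (bg i) => /andP [h1 h2].
  by left; apply/andP; split; lra.
by right; apply/andP; split; lra.
Qed.

Lemma between_trans g g' h : between g g' -> between g' h -> between g h.
Proof.
move=> b1 b2 i; case: (b1 i) => /andP [h1 h2]; case: (b2 i) => /andP [h3 h4];
  by first [by left; apply/andP; split; lra | by right; apply/andP; split; lra].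
Qed.

End Basics.

Section Circ.
Variables (R : realFieldType) (d n : nat) (A : 'M[int]_(d, n)).
Implicit Types (v w g h : 'cV[R]_n).

Definition kerv v := intmx R A *m v = 0.
Definition minsupp g := forall w, kerv w -> w != 0 ->
  (forall i, w i 0 != 0 -> g i 0 != 0) -> (forall i, g i 0 != 0 -> w i 0 != 0).

Lemma nz_coord (k : nat) (v : 'cV[R]_k) : v != 0 -> exists i, v i 0 != 0.
Proof.
move=> nz; apply/existsP; apply: contraR nz => /existsPn H.
apply/eqP/matrixP => i j; rewrite (ord1 j) mxE; apply/eqP.
by move: (H i); rewrite negbK.
Qed.

Lemma kervD v w : kerv v -> kerv w -> kerv (v + w).
Proof. by rewrite /kerv mulmxDr => -> ->; rewrite addr0. Qed.
Lemma kervZ (a : R) v : kerv v -> kerv (a *: v).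
Proof. by rewrite /kerv -scalemxAr => ->; rewrite scaler0. Qed.
Lemma kervN v : kerv v -> kerv (- v).
Proof. by rewrite /kerv mulmxN => ->; rewrite oppr0. Qed.
Lemma kervB v w : kerv v -> kerv w -> kerv (v - w).
Proof. by move=> kv kw; apply: kervD => //; apply: kervN. Qed.

Lemma intmx_ratr : map_mx ratr (map_mx (fun a : int => a%:~R : rat) A) = intmx R A.
Proof. by apply/matrixP => i j; rewrite !mxE ratr_int. Qed.

Lemma rat_rep g : kerv g -> g != 0 -> minsupp g ->
  exists q : 'cV[rat]_n, exists t : R, 0 < t /\ map_mx ratr q = t *: g.
Proof.
move=> kg nzg ms.
pose D : 'rV[rat]_n := \row_i (if g i 0 == 0 then 1 else 0).
pose M := col_mx (map_mx (fun a : int => a%:~R : rat) A) (diag_mx D).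
have MR : map_mx (@ratr R) M = col_mx (intmx R A) (diag_mx (map_mx (@ratr R) D)).
  rewrite map_col_mx intmx_ratr; congr col_mx.
  by apply/matrixP => i j; rewrite !mxE; case: (i == j); rewrite ?rmorph0.
have MRg : map_mx (@ratr R) M *m g = 0.
  rewrite MR mul_col_mx kg mul_diag_mx.
  have -> : \matrix_(i, j) ((map_mx (@ratr R) D) 0 i * g i j) = 0 :> 'cV[R]_n.
    apply/matrixP => i j; rewrite !mxE (ord1 j).
    by case: eqP => [->|_]; rewrite ?mulr0 ?rmorph0 ?mul0r.
  by apply/eqP; rewrite col_mx_eq0 !eqxx.
have nfree : ~~ row_free (map_mx (@ratr R) M)^T.
  rewrite -kermx_eq0; apply: contraNN nzg => /eqP K0.
  rewrite -trmx_eq0 -submx0 -K0; apply/sub_kermxP.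
  by rewrite -trmx_mul MRg trmx0.
have nfreeQ : ~~ row_free M^T.
  by move: nfree; rewrite map_trmx /row_free mxrank_map.
move: nfreeQ; rewrite -kermx_eq0 => nzK.
have [i nzr] : exists i, row i (kermx M^T) != 0.
  apply/existsP; apply: contraR nzK => /existsPn H.
  apply/eqP/row_matrixP => i; rewrite row0; apply/eqP.
  by move: (H i); rewrite negbK.
set r := row i (kermx M^T) in nzr.
have Mr : M *m r^T = 0.
  have : r *m M^T = 0 by apply/sub_kermxP; apply: row_sub.
  by move=> /(congr1 trmx); rewrite trmx_mul trmxK trmx0.
set qR := map_mx (@ratr R) r^T.
have MqR : map_mx (@ratr R) M *m qR = 0 by rewrite -map_mxM Mr map_mx0.
move: MqR; rewrite MR mul_col_mx => /eqP; rewrite col_mx_eq0 => /andP [/eqP kq /eqP dq].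
have supq : forall j, g j 0 = 0 -> qR j 0 = 0.
  move=> j gj; move/matrixP: dq => /(_ j 0); rewrite mul_diag_mx !mxE gj eqxx rmorph1 mul1r.
  by [].
have nzq : qR != 0 by rewrite map_mx_eq0 trmx_eq0.
have qRdef : map_mx (@ratr R) r^T = qR by [].
clearbody qR.
have [i0 gi0] := nz_coord nzg.
pose t := qR i0 0 / g i0 0.
have eq : qR = t *: g.
  apply/eqP; rewrite -subr_eq0; apply/negPn/negP => nzw.
  have := ms _ (kervB kq (kervZ t kg)) nzw _ i0 gi0.
  rewrite !mxE /t divfK // subrr eqxx => H; suff: ~~ true by []; apply: H => j.
  rewrite !mxE; apply: contraNN => /eqP gj.
  by rewrite (supq j gj) gj mulr0 subrr.
have tnz : t != 0.
  by apply: contraNN nzq => /eqP t0; rewrite eq t0 scale0r.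
case: (ltrgtP t 0) => [tneg|tpos|]; last by move/eqP: tnz.
  exists (- r^T), (- t); split; first by rewrite oppr_gt0.
  by rewrite raddfN /= qRdef eq scaleNr.
by exists r^T, t; rewrite qRdef.
Qed.


Lemma int_rep g : (exists q : 'cV[rat]_n, exists t : R, 0 < t /\ map_mx ratr q = t *: g) ->
  exists z : 'cV[int]_n, exists s : R, 0 < s /\ intcv R z = s *: g.
Proof.
move=> [q [t [tp qe]]].
pose Dn : int := \prod_(i < n) denq (q i 0).
pose z : 'cV[int]_n := \col_i (numq (q i 0) * \prod_(j < n | j != i) denq (q j 0)).
have zq : forall i, (z i 0)%:~R = Dn%:~R * q i 0 :> rat.
  move=> i; rewrite mxE intrM numqE /Dn [X in (X%:~R * q i 0)](bigD1 i) //= intrM; ring.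
clearbody z.
have Dp : 0 < Dn by apply: prodr_gt0 => j _; exact: denq_gt0.
exists z, (Dn%:~R * t); split; first by rewrite mulr_gt0 // ltr0z.
apply/matrixP => i j; rewrite (ord1 j) !mxE.
rewrite -(ratr_int R (z i 0)) zq rmorphM rmorph_int.
have := congr1 (fun M : 'cV[R]_n => M i 0) qe; rewrite !mxE => e.
by rewrite -mulrA -e.
Qed.

Lemma minex (P : nat -> Prop) : (exists k, P k) -> exists k, P k /\ forall k', P k' -> (k <= k')%N.
Proof.
case=> k; elim: k {-2}k (leqnn k) => [|N IH] k hk Pk.
  by exists k; split => // k' _; move: hk; rewrite leqn0 => /eqP ->.
case: (Classical_Prop.classic (exists k', P k' /\ (k' < k)%N)) => [[k' [Pk' lt]]|H].
  by apply: (IH k') => //; rewrite -ltnS (leq_trans lt hk).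
exists k; split => // k' Pk'; rewrite leqNgt; apply/negP => lt; apply: H; exists k'; split => //.
Qed.

Lemma intcvE (w : 'cV[int]_n) i : intcv R w i 0 = (w i 0)%:~R.
Proof. by rewrite mxE. Qed.

Lemma intcv_eq0 (w : 'cV[int]_n) : intcv R w = 0 -> w = 0.
Proof.
move=> H; apply/matrixP => i j; rewrite (ord1 j) mxE; apply/eqP.
by rewrite -(eqr_int R) -intcvE H mxE.
Qed.

Lemma intcvN (w : 'cV[int]_n) : intcv R (- w) = - intcv R w.
Proof. by apply/matrixP => i j; rewrite !mxE intrN. Qed.

Lemma circuit_of_min g : kerv g -> g != 0 -> minsupp g ->
  exists z s, [/\ is_circuit R A z, 0 < s & intcv R z = s *: g].
Proof.
move=> kg nzg ms.
have [i0 gi0] := nz_coord nzg.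
pose P k := exists z : 'cV[int]_n, exists s : R, [/\ 0 < s, intcv R z = s *: g & (absz (z i0 0)) = k].
have [z0 [s0 [s0p e0]]] := int_rep (rat_rep kg nzg ms).
have : exists k, P k by exists (absz (z0 i0 0)), z0, s0.
move=> /minex [k [[z [s [sp ez ek]]] kmin]].
have snz : s != 0 by rewrite gt_eqF.
have zi : forall i, (z i 0 != 0) = (g i 0 != 0).
  move=> i; have := congr1 (fun M : 'cV[R]_n => M i 0) ez; rewrite !mxE => e.
  by rewrite -(intr_eq0 R) e mulf_eq0 negb_or snz.
exists z, s; split => //; split.
- by rewrite ez; exact: (kervZ s kg).
- by apply: contraTneq gi0 => ze; rewrite -zi ze mxE.
- move=> w kw nzw H i; rewrite zi => gi; apply: (ms w kw nzw) => // j wj.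
  by rewrite -zi; apply: H.
- move=> w t nzw ew.
  case: (lerP 1 `|t|) => // lt1; exfalso.
  have ew' : intcv R w = (t * s) *: g by rewrite ew ez scalerA.
  have key : forall (w' : 'cV[int]_n) (s' : R), 0 < s' -> intcv R w' = s' *: g ->
      (k <= absz (w' i0 ord0))%N.
    by move=> w' s' s'p e'; apply: kmin; exists w', s'.
  have nat_eq : forall (v : 'cV[int]_n), ((absz (v i0 0))%:R : R) = `|intcv R v i0 0|.
    by move=> v; rewrite natr_absz intr_norm mxE.
  have zk : (k%:R : R) = `|s * g i0 0|.
    by rewrite -ek nat_eq ez mxE.
  have wabs : `|intcv R w i0 0| = `|t| * k%:R.
    by rewrite ew' mxE zk -normrM mulrA.
  have kpos : (0 : R) < k%:R by rewrite zk normr_gt0 mulf_neq0.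
  have tnz : t != 0.
    apply: contraNneq nzw => t0; apply/eqP; apply: intcv_eq0; rewrite ew t0 scale0r //.
  have : (k <= absz (w i0 ord0))%N.
    case: (ltrgtP t 0) => [tn|tp|t0]; last by rewrite t0 eqxx in tnz.
      have -> : (absz (w i0 ord0)) = (absz ((- w) i0 ord0)) by rewrite mxE abszN.
      apply: (key _ (- (t * s))); first by rewrite oppr_gt0 pmulr_llt0.
      by rewrite intcvN ew' scaleNr.
    by apply: (key _ (t * s)) => //; rewrite mulr_gt0.
  rewrite -(ler_nat R) nat_eq wabs => H.
  have : `|t| * k%:R < k%:R by rewrite gtr_pMl.
  by rewrite ltNge H.
Qed.

End Circ.

Section Conf.
Variables (R : realFieldType) (d n : nat) (A : 'M[int]_(d, n)).
Implicit Types (v w g h : 'cV[R]_n).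

Definition wconf g h := forall i, g i 0 != 0 -> 0 < g i 0 * h i 0.
Definition supp v := [pred i : 'I_n | v i 0 != 0].

Lemma reduce g h w : kerv A g -> wconf g h -> kerv A w ->
  (forall i, w i 0 != 0 -> g i 0 != 0) ->
  (exists j, 0 < w j 0 * g j 0) ->
  (exists i, g i 0 != 0 /\ w i 0 = 0) ->
  exists g', [/\ kerv A g', g' != 0, wconf g' h & (#|supp g'| < #|supp g|)%N].
Proof.
move=> kg wg kw sub exj [i [gi wi]].
have [j0 [pj0 minj]] := fmin (fun j => g j 0 / w j 0) exj.
pose t := g j0 0 / w j0 0.
have wj0 : w j0 0 != 0 by apply: contraTneq pj0 => ->; rewrite mul0r ltxx.
have tp : 0 < t.
  rewrite /t -(divfK wj0 (g j0 0)) in pj0.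
  have : 0 < w j0 0 ^+ 2 by rewrite lt_def sqrf_eq0 wj0 sqr_ge0.
  rewrite /t; move: pj0; set q := g j0 0 / w j0 0; set ww := w j0 0.
  rewrite expr2 => H1 H2.
  have : 0 < q * (ww * ww) by move: H1; rewrite mulrCA mulrA.
  by rewrite pmulr_lgt0.
pose g' := g - t *: w.
have g'E : forall l, g' l 0 = g l 0 - t * w l 0 by move=> l; rewrite !mxE.
have sub' : forall l, g' l 0 != 0 -> g l 0 != 0.
  move=> l; rewrite g'E; apply: contraNN => /eqP gl.
  have : w l 0 = 0 by apply/eqP; apply: (contraTT (sub l)); rewrite gl.
  by move=> ->; rewrite gl mulr0 subrr.
exists g'; split.
- by apply: kervB => //; apply: kervZ.
- by apply/eqP => /matrixP /(_ i 0); rewrite g'E wi mulr0 subr0 mxE; apply/eqP.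
- move=> l gl'; have gl := sub' l gl'; have ghl := wg l gl.
  have s1 : 0 <= g' l 0 * g l 0.
    rewrite g'E; case: (ltrP 0 (w l 0 * g l 0)) => wgl.
      have wl0 : w l 0 != 0 by apply: contraTneq wgl => ->; rewrite mul0r ltxx.
      have [q ge] : exists q, g l 0 = q * w l 0 by exists (g l 0 / w l 0); rewrite divfK.
      have tq : t <= q by have := minj l wgl; rewrite ge mulfK.
      rewrite ge in wgl *; nra.
    nra.
  have s2 : 0 < g' l 0 * g l 0.
    by rewrite lt_def s1 andbT mulf_neq0.
  have : 0 < g l 0 ^+ 2 by rewrite lt_def sqrf_eq0 gl sqr_ge0.
  nra.
- apply: proper_card; apply/properP; split.
    by apply/subsetP => l; rewrite !inE; apply: sub'.
  exists j0; rewrite !inE.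
    by apply: contraTneq pj0 => ->; rewrite mulr0 ltxx.
  by rewrite g'E /t divfK // subrr eqxx.
Qed.


Lemma conf_min h : kerv A h -> h != 0 ->
  exists g, [/\ kerv A g, g != 0, wconf g h & minsupp A g].
Proof.
move=> kh nzh.
pose P k := exists g, [/\ kerv A g, g != 0, wconf g h & #|supp g| = k].
have : exists k, P k.
  exists #|supp h|, h; split => // i hi.
  by rewrite lt_def mulf_neq0 //= -expr2 sqr_ge0.
move=> /minex [k [[g [kg nzg wg ek]] kmin]].
exists g; split => // w kw nzw sub i gi.
case: (eqVneq (w i 0) 0) => // wi0; exfalso.
have [j wj] := nz_coord nzw.
have gj := sub j wj.
have ex : exists i, g i 0 != 0 /\ w i 0 = 0 by exists i.
have wgj : w j 0 * g j 0 != 0 by rewrite mulf_neq0.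
case: (ltrgtP 0 (w j 0 * g j 0)) => [pos|neg|e]; last by rewrite -e eqxx in wgj.
  have [g' [kg' nzg' wg' lt]] := reduce kg wg kw sub (ex_intro _ j pos) ex.
  have := kmin _ (ex_intro _ g' (And4 kg' nzg' wg' erefl)).
  by rewrite -ek leqNgt lt.
have s1 : forall l, (- w) l 0 != 0 -> g l 0 != 0.
  by move=> l; rewrite mxE oppr_eq0; apply: sub.
have s2 : exists j, 0 < (- w) j 0 * g j 0 by exists j; rewrite mxE mulNr oppr_gt0.
have s3 : exists i, g i 0 != 0 /\ (- w) i 0 = 0 by exists i; rewrite mxE wi0 oppr0.
have [g' [kg' nzg' wg' lt]] := reduce kg wg (kervN kw) s1 s2 s3.
have := kmin _ (ex_intro _ g' (And4 kg' nzg' wg' erefl)).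
by rewrite -ek leqNgt lt.
Qed.

Lemma conf_circuit h : kerv A h -> h != 0 ->
  exists z, is_circuit R A z /\ wconf (intcv R z) h.
Proof.
move=> kh nzh; have [g [kg nzg wg ms]] := conf_min kh nzh.
have [z [s [cz sp ez]]] := circuit_of_min kg nzg ms.
exists z; split => // i; rewrite ez mxE => nz.
rewrite -mulrA pmulr_rgt0 //; apply: wg.
by apply: contraNneq nz => ->; rewrite mulr0.
Qed.

Lemma minstep g h : wconf g h -> g != 0 ->
  exists lam, [/\ 0 < lam, between (lam *: g) h & exists i, g i 0 != 0 /\ h i 0 = lam * g i 0].
Proof.
move=> wg nzg.
have [i0 [gi0 mini]] := fmin (fun i => h i 0 / g i 0) (nz_coord nzg).
have gh0 := wg i0 gi0.
have [q0 e0] : exists q, h i0 0 = q * g i0 0 by exists (h i0 0 / g i0 0); rewrite divfK.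
exists (h i0 0 / g i0 0); split.
- rewrite e0 mulfK //; move: gh0; rewrite e0; nra.
- move=> l; rewrite mxE.
  case: (eqVneq (g l 0) 0) => [->|gl].
    by rewrite mulr0; case: (lerP 0 (h l 0)) => hl; [left|right]; apply/andP; split => //; apply: ltW.
  have [q e] : exists q, h l 0 = q * g l 0 by exists (h l 0 / g l 0); rewrite divfK.
  have := mini l gl; have := wg l gl; rewrite e mulfK // => ghl.
  move: gh0; rewrite e0 mulfK // => gh0 qq.
  case: (ltrP 0 (g l 0)) => glp; [left|right]; apply/andP; split; nra.
- by exists i0; split => //; rewrite divfK.
Qed.

Definition rr (c : 'cV[int]_n) v := - dotc c v / norm1 v.

Lemma rrZ c (a : R) v : 0 < a -> rr c (a *: v) = rr c v.
Proof.
move=> ap; rewrite /rr dotcZ norm1Z gtr0_norm //.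
case: (eqVneq (norm1 v) 0) => [->|nz]; first by rewrite mulr0 !invr0 !mulr0.
by field; rewrite nz gt_eqF.
Qed.

Lemma mediant (a b p q : R) : 0 < p -> 0 < q ->
  a / p < (a + b) / (p + q) -> (a + b) / (p + q) <= b / q.
Proof.
move=> pp qp; set r := (a + b) / (p + q) => H.
have pq : 0 < p + q by rewrite addr_gt0.
have er : a + b = r * (p + q) by rewrite /r divfK // gt_eqF.
rewrite ler_pdivlMr //; move: H; rewrite ltr_pdivrMr // => H.
nra.
Qed.

Lemma card_supp_sub h h' i : (forall l, h' l 0 != 0 -> h l 0 != 0) ->
  h i 0 != 0 -> h' i 0 = 0 -> (#|supp h'| < #|supp h|)%N.
Proof.
move=> sub hi hi'; apply: proper_card; apply/properP; split.
  by apply/subsetP => l; rewrite !inE; apply: sub.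
by exists i; rewrite !inE ?hi' ?eqxx.
Qed.

Lemma ratio_bound c N h : (#|supp h| <= N)%N -> kerv A h -> h != 0 ->
  exists z lam, [/\ is_circuit R A z, 0 < lam, between (lam *: intcv R z) h
                  & rr c h <= sd_ratio R c z].
Proof.
elim: N h => [|N IH] h hN kh nzh.
  have [i hi] := nz_coord nzh.
  have : (0 < #|supp h|)%N by apply/card_gt0P; exists i; rewrite inE.
  by rewrite lt0n -leqn0 hN.
have [z [cz wz]] := conf_circuit kh nzh.
set G := intcv R z in wz.
have nzG : G != 0.
  by case: cz => _ nz _ _; apply: contraNneq nz => /intcv_eq0 ->.
have kG : kerv A G by case: cz.
have [lam [lp bw [i [Gi hi]]]] := minstep wz nzG.
have sdz : sd_ratio R c z = rr c (lam *: G) by rewrite rrZ.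
pose h' := h - lam *: G.
have h'E : forall l, h' l 0 = h l 0 - lam * G l 0 by move=> l; rewrite !mxE.
case: (eqVneq h' 0) => [h0|nzh'].
  have -> : h = lam *: G by apply/eqP; rewrite -subr_eq0 -/h' h0.
  exists z, lam; split => //; last by rewrite sdz.
  move=> l; case: (lerP 0 ((lam *: G) l 0)) => hl; [left|right]; apply/andP; split => //; exact: ltW.
have kh' : kerv A h' by apply: kervB => //; apply: kervZ.
have sub : forall l, h' l 0 != 0 -> h l 0 != 0.
  move=> l; rewrite h'E; apply: contraNN => /eqP hl0.
  have : G l 0 = 0.
    case: (eqVneq (G l 0) 0) => // Gl; have := wz l Gl; rewrite hl0 mulr0 ltxx //.
  by move=> ->; rewrite hl0 mulr0 subrr.
have hi0 : h i 0 != 0 by rewrite hi mulf_neq0 // gt_eqF.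
have hi' : h' i 0 = 0 by rewrite h'E hi subrr.
have lt := card_supp_sub sub hi0 hi'.
have hN' : (#|supp h'| <= N)%N by rewrite -ltnS (leq_trans lt hN).
have [z' [lam' [cz' lp' bw' rat']]] := IH h' hN' kh' nzh'.
have bh' : between h' h := between_sub bw.
have eh : h = lam *: G + h' by rewrite /h' addrC subrK.
have en := between_norm1 bw; rewrite -/h' in en.
have nzlG : lam *: G != 0 by rewrite scaler_eq0 negb_or nzG gt_eqF.
have pp := norm1_gt0 nzlG; have qp := norm1_gt0 nzh'.
have erh : rr c h = (- dotc c (lam *: G) + - dotc c h') / (norm1 (lam *: G) + norm1 h').
  by rewrite /rr -en {1}eh dotcD opprD.
case: (lerP (rr c h) (rr c (lam *: G))) => H.
  by exists z, lam; split => //; rewrite sdz.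
exists z', lam'; split => //; first exact: between_trans bh'.
apply: le_trans rat'; rewrite erh /rr; apply: mediant => //.
by rewrite -erh.
Qed.

End Conf.

Section Key.
Variables (R : realFieldType) (d n : nat) (A : 'M[int]_(d, n)) (b : 'cV[int]_d)
  (c u : 'cV[int]_n).

Lemma norm10 : norm1 (0 : 'cV[R]_n) = 0.
Proof. by rewrite /norm1 big1 // => i _; rewrite mxE normr0. Qed.

Lemma feas_kerv (x y : 'cV[R]_n) : feasible A b u x -> feasible A b u y -> kerv A (y - x).
Proof. by case=> Ax _ [Ay _]; rewrite /kerv mulmxBr Ax Ay subrr. Qed.

Lemma key (x y : 'cV[R]_n) (r : R) : feasible A b u x -> feasible A b u y ->
  (forall z, is_circuit R A z -> feas_dir A b u x z -> sd_ratio R c z <= r) ->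
  - dotc c (y - x) <= r * norm1 (y - x).
Proof.
move=> fx fy steep; have kh := feas_kerv fx fy.
case: (eqVneq (y - x) 0) => [->|nzh]; first by rewrite dotc0 norm10 oppr0 mulr0.
have [z [lam [cz lp bw rat]]] := ratio_bound c (leqnn _) kh nzh.
have fd : feas_dir A b u x z.
  exists lam; split => //; case: fx => Ax bx; case: fy => Ay byy; split.
    by rewrite mulmxDr Ax -scalemxAr; case: cz => -> _ _ _; rewrite scaler0 addr0.
  move=> i; have := bx i; have := byy i; case: (bw i); rewrite !mxE.
    by move=> /andP [h1 h2] /andP [h3 h4] /andP [h5 h6]; apply/andP; split; lra.
  by move=> /andP [h1 h2] /andP [h3 h4] /andP [h5 h6]; apply/andP; split; lra.
have := le_trans rat (steep z cz fd).
by rewrite /rr ler_pdivrMr // norm1_gt0.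
Qed.

End Key.

Section Sums.
Variables (R : realFieldType) (n : nat).

Lemma psum_seq_eq0 (s : seq nat) (F : nat -> R) :
  (forall j, j \in s -> 0 <= F j) -> \sum_(j <- s) F j <= 0 ->
  forall j, j \in s -> F j = 0.
Proof.
move=> H Hs.
have Hs0 : \sum_(j <- s) F j = 0.
  apply/eqP; rewrite eq_le Hs /= big_seq; apply: sumr_ge0 => i; exact: H.
move=> j js; apply/eqP; rewrite eq_le H // andbT -Hs0.
rewrite (big_rem j) //= lerDl big_seq; apply: sumr_ge0 => i ir.
by apply: H; apply: (mem_rem ir).
Qed.

Lemma sign_all (s : seq nat) (F : nat -> R) j0 : j0 \in s -> 0 < F j0 ->
  `|\sum_(j <- s) F j| = \sum_(j <- s) `|F j| -> forall j, j \in s -> 0 <= F j.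
Proof.
move=> j0s Fj0 E.
case: (lerP 0 (\sum_(j <- s) F j)) => S.
  have nn : forall j, j \in s -> 0 <= (fun j => `|F j| - F j) j.
    by move=> j _; rewrite subr_ge0 ler_norm.
  have le : \sum_(j <- s) (fun j => `|F j| - F j) j <= 0.
    by rewrite sumrB -E ger0_norm // subrr.
  move=> j js; have := psum_seq_eq0 nn le js => /eqP; rewrite subr_eq0 => /eqP <-.
  exact: normr_ge0.
have nn : forall j, j \in s -> 0 <= (fun j => `|F j| + F j) j.
  by move=> j _; rewrite -lerBlDr sub0r -normrN ler_norm.
have le : \sum_(j <- s) (fun j => `|F j| + F j) j <= 0.
  by rewrite big_split /= -E ltr0_norm // addNr.
have := psum_seq_eq0 nn le j0s; rewrite /= gtr0_norm // => e.
by exfalso; move: Fj0; rewrite lt_def; move/eqP: e; rewrite -mulr2n mulrn_eq0 /= => ->.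
Qed.



Lemma tri_eq (s : seq nat) (V : nat -> 'cV[R]_n) :
  \sum_(j <- s) norm1 (V j) <= norm1 (\sum_(j <- s) V j) ->
  forall i, `|\sum_(j <- s) V j i 0| = \sum_(j <- s) `|V j i 0|.
Proof.
move=> H i.
have each : forall i, `|\sum_(j <- s) V j i 0| <= \sum_(j <- s) `|V j i 0|.
  by move=> l; apply: ler_norm_sum.
have E : \sum_(j <- s) norm1 (V j) = \sum_(l < n) \sum_(j <- s) `|V j l 0|.
  by rewrite /norm1 exchange_big.
have N : norm1 (\sum_(j <- s) V j) = \sum_(l < n) `|\sum_(j <- s) V j l 0|.
  by apply: eq_bigr => l _; rewrite summxE.
have nn : forall l : 'I_n, true -> 0 <= \sum_(j <- s) `|V j l 0| - `|\sum_(j <- s) V j l 0|.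
  by move=> l _; rewrite subr_ge0.
have s0 : \sum_(l < n) (\sum_(j <- s) `|V j l 0| - `|\sum_(j <- s) V j l 0|) = 0.
  apply/eqP; rewrite eq_le; apply/andP; split; last by apply: sumr_ge0 => l _; apply: nn.
  by rewrite sumrB -E -N subr_le0.
have := psumr_eq0P nn s0 (i := i) isT.
by move/eqP; rewrite subr_eq0 => /eqP.
Qed.

End Sums.

Section Main.
Variables (R : realFieldType) (d n : nat) (A : 'M[int]_(d, n)) (b : 'cV[int]_d)
  (c u : 'cV[int]_n).
Variables (x : nat -> 'cV[R]_n) (K : nat).
Hypothesis hx0 : feasible A b u (x 0%N).
Hypothesis hsteps : forall k, (k < K)%N -> sd_step A b c u (x k) (x k.+1).

Definition SP k (p : 'cV[int]_n * R) :=
  [/\ is_circuit R A p.1, feas_dir A b u (x k) p.1,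
      (forall z', is_circuit R A z' -> feas_dir A b u (x k) z' ->
          sd_ratio R c z' <= sd_ratio R c p.1),
      0 < sd_ratio R c p.1 &
      [/\ feasible A b u (x k + p.2 *: intcv R p.1),
          (forall beta, feasible A b u (x k + beta *: intcv R p.1) -> beta <= p.2) &
          x k.+1 = x k + p.2 *: intcv R p.1]].

Lemma sp_ex k : exists p, (k < K)%N -> SP k p.
Proof.
case: (ltnP k K) => hk; last by exists (0, 0).
have [z [cz fd st pos [al [f1 f2 e]]]] := hsteps hk.
by exists (z, al).
Qed.

Definition sp k := proj1_sig (constructive_indefinite_description _ (sp_ex k)).
Lemma spP k : (k < K)%N -> SP k (sp k).
Proof. by rewrite /sp; case: constructive_indefinite_description. Qed.

Definition zs k := (sp k).1.
Definition al k := (sp k).2.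
Definition G k := intcv R (zs k).
Definition rt k := sd_ratio R c (zs k).

Lemma circ k : (k < K)%N -> is_circuit R A (zs k).
Proof. by case/spP. Qed.
Lemma fdir k : (k < K)%N -> feas_dir A b u (x k) (zs k).
Proof. by case/spP. Qed.
Lemma steep k : (k < K)%N -> forall z, is_circuit R A z -> feas_dir A b u (x k) z ->
  sd_ratio R c z <= rt k.
Proof. by case/spP. Qed.
Lemma rt_pos k : (k < K)%N -> 0 < rt k.
Proof. by case/spP. Qed.
Lemma xS k : (k < K)%N -> x k.+1 = x k + al k *: G k.
Proof. by case/spP => _ _ _ _ []. Qed.
Lemma almax k : (k < K)%N -> forall beta, feasible A b u (x k + beta *: G k) -> beta <= al k.
Proof. by case/spP => _ _ _ _ []. Qed.

Lemma feas_all k : (k <= K)%N -> feasible A b u (x k).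
Proof.
elim: k => // k IH hk; have [_ _ _ _ [f _ e]] := spP hk.
by rewrite e.
Qed.

Lemma al_pos k : (k < K)%N -> 0 < al k.
Proof.
move=> hk; have [eps [ep f]] := fdir hk.
exact: lt_le_trans ep (almax hk f).
Qed.

Lemma G_nz k : (k < K)%N -> G k != 0.
Proof.
move=> hk; case: (circ hk) => _ nz _ _.
by apply: contraNneq nz => /intcv_eq0 ->.
Qed.

Lemma kerG k : (k < K)%N -> kerv A (G k).
Proof. by move=> hk; case: (circ hk). Qed.

Lemma dir_eq k (a : R) : (k < K)%N -> 0 < a ->
  - dotc c (a *: G k) = rt k * norm1 (a *: G k).
Proof.
move=> hk ap.
have nz : a *: G k != 0 by rewrite scaler_eq0 negb_or gt_eqF // G_nz.
have -> : rt k = rr c (a *: G k) by rewrite rrZ.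
by rewrite /rr divfK // gt_eqF // norm1_gt0.
Qed.

Lemma mono1 k : (k.+1 < K)%N -> rt k.+1 <= rt k.
Proof.
move=> hk1; have hk : (k < K)%N by apply: ltnW.
have [eps [ep fy]] := fdir hk1.
have := key (c := c) (r := rt k) (feas_all (ltnW hk)) fy (steep hk).
have -> : x k.+1 + eps *: intcv R (zs k.+1) - x k = al k *: G k + eps *: G k.+1.
  by rewrite (xS hk) /G; set p := x k; set q := al k *: _; set r := eps *: _; rewrite [LHS]addrC addrA addKr.
rewrite dotcD opprD dir_eq ?al_pos // dir_eq //.
have t := norm1D_le (al k *: G k) (eps *: G k.+1).
have N2 : 0 < norm1 (eps *: G k.+1) by rewrite norm1_gt0 // scaler_eq0 negb_or gt_eqF // G_nz.
have rp := rt_pos hk.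
move=> H.
have : rt k.+1 * norm1 (eps *: G k.+1) <= rt k * norm1 (eps *: G k.+1).
  have := ler_wpM2l (ltW rp) t; move: H; lra.
by rewrite ler_pM2r.
Qed.

Lemma mono k k' : (k <= k')%N -> (k' < K)%N -> rt k' <= rt k.
Proof.
move=> le; elim: k' le => [|k' IH] le hk.
  by move: le; rewrite leqn0 => /eqP ->.
case: (ltngtP k k'.+1) le => // [lt _|-> _]; last by [].
apply: le_trans (mono1 hk) _; apply: IH => //; exact: ltnW.
Qed.

End Main.

Section Main2.
Variables (R : realFieldType) (d n : nat) (A : 'M[int]_(d, n)) (b : 'cV[int]_d)
  (c u : 'cV[int]_n).
Variables (x : nat -> 'cV[R]_n) (K : nat).
Hypothesis hx0 : feasible A b u (x 0%N).
Hypothesis hsteps : forall k, (k < K)%N -> sd_step A b c u (x k) (x k.+1).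

Notation G := (G hsteps).
Notation rt := (rt hsteps).
Notation al := (al hsteps).

Definition hitp k i := G k i 0 != 0 /\
  ((0 < G k i 0 /\ x k.+1 i 0 = (u i 0)%:~R) \/ (G k i 0 < 0 /\ x k.+1 i 0 = 0)).

Lemma hit k : (k < K)%N -> exists i, hitp k i.
Proof.
move=> hk.
have fx' : feasible A b u (x k.+1) := feas_all hx0 hsteps hk.
case: (Classical_Prop.classic (exists i, hitp k i)) => // H; exfalso.
have slack : forall i, G k i 0 != 0 ->
    (0 < G k i 0 -> x k.+1 i 0 < (u i 0)%:~R) /\ (G k i 0 < 0 -> 0 < x k.+1 i 0).
  move=> i gi; case: fx' => _ /(_ i) /andP [l1 l2]; split => gp.
    rewrite lt_neqAle l2 andbT; apply/negP => /eqP e; apply: H; exists i.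
    by split => //; left.
  rewrite lt_neqAle l1 andbT; apply/negP => /eqP e; apply: H; exists i.
  by split => //; right.
pose delta i := if 0 < G k i 0 then ((u i 0)%:~R - x k.+1 i 0) / G k i 0
                else x k.+1 i 0 / (- G k i 0).
have [i0 [gi0 mini]] := fmin delta (nz_coord (G_nz hsteps hk)).
have dpos : forall i, G k i 0 != 0 -> 0 < delta i.
  move=> i gi; have [s1 s2] := slack i gi; rewrite /delta.
  case: ifP => gp.
    by apply: divr_gt0; [rewrite subr_gt0; apply: s1 | ].
  have gn : G k i 0 < 0 by rewrite lt_neqAle gi /= leNgt gp.
  by apply: divr_gt0; [apply: s2 | rewrite oppr_gt0].
have fnew : feasible A b u (x k + (al k + delta i0) *: G k).
  have -> : x k + (al k + delta i0) *: G k = x k.+1 + delta i0 *: G k.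
    by rewrite (xS hsteps hk) scalerDl addrA.
  case: fx' => Ax bx; split.
    by rewrite mulmxDr Ax -scalemxAr (kerG hsteps hk) scaler0 addr0.
  move=> l; have -> : (x k.+1 + delta i0 *: G k) l 0 = x k.+1 l 0 + delta i0 * G k l 0 by rewrite !mxE.
  have := bx l => /andP [l1 l2].
  have dp := dpos i0 gi0.
  case: (eqVneq (G k l 0) 0) => [->|gl]; first by rewrite mulr0 addr0 l1 l2.
  have := mini l gl; rewrite [delta l]/delta.
  set D := delta i0 in dp *.
  case: ifP => gp.
    rewrite ler_pdivlMr // => dl; apply/andP; split.
      by rewrite addr_ge0 // mulr_ge0 // ltW.
    by rewrite -lerBrDl.
  have gn : G k l 0 < 0 by rewrite lt_neqAle gl /= leNgt gp.
  rewrite ler_pdivlMr ?oppr_gt0 // mulrN => dl; apply/andP; split.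
    by rewrite -lerBlDr sub0r.
  apply: (le_trans _ l2); nra.
have := almax hk fnew; have := dpos i0 gi0; lra.
Qed.

End Main2.

Section Main3.
Variables (R : realFieldType) (d n : nat) (A : 'M[int]_(d, n)) (b : 'cV[int]_d)
  (c u : 'cV[int]_n).
Variables (x : nat -> 'cV[R]_n) (K : nat).
Hypothesis hx0 : feasible A b u (x 0%N).
Hypothesis hsteps : forall k, (k < K)%N -> sd_step A b c u (x k) (x k.+1).

Notation G := (G hsteps).
Notation rt := (rt hsteps).
Notation al := (al hsteps).

Lemma dotc_sum (s : seq nat) (V : nat -> 'cV[R]_n) :
  dotc c (\sum_(j <- s) V j) = \sum_(j <- s) dotc c (V j).
Proof. by apply: big_morph; [move=> v w; apply: dotcD | apply: dotc0]. Qed.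

Lemma block k k' : (k < k')%N -> (k' < K)%N -> rt k = rt k' ->
  forall i, hitp hsteps k i -> G k' i 0 = 0.
Proof.
move=> lt hK req i [Gi hcase].
have hk : (k < K)%N by apply: ltn_trans hK.
have req' : forall j, (k <= j <= k')%N -> rt j = rt k.
  move=> j /andP [kj jk']; apply/eqP; rewrite eq_le (mono hx0 hsteps kj) //=.
    by rewrite req (mono hx0 hsteps jk').
  exact: leq_ltn_trans hK.
have [eps [ep fy]] := fdir hsteps hK.
pose V j := if (j < k')%N then x j.+1 - x j else eps *: G k'.
have sumV : x k' + eps *: G k' - x k = \sum_(k <= j < k'.+1) V j.
  rewrite big_nat_recr /=; last exact: ltnW.
  have -> : \sum_(k <= j < k') V j = \sum_(k <= j < k') (x j.+1 - x j).
    by apply: eq_big_nat => j /andP [_ jl]; rewrite /V jl.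
  have -> : V k' = eps *: G k' by rewrite /V ltnn.
  by rewrite telescope_sumr ?(ltnW lt) // addrAC.
have Vdir : forall j, (k <= j < k'.+1)%N -> - dotc c (V j) = rt k * norm1 (V j).
  move=> j /andP [kj jk]; rewrite /V; case: ifP => jl.
    have jK : (j < K)%N by apply: ltn_trans hK.
    rewrite (xS hsteps jK) addrC addKr (dir_eq hsteps) ?(al_pos hsteps) // req' // kj.
    by rewrite ltnW.
  by rewrite (dir_eq hsteps) // req' // ltnW // leqnn.
have dsum : - dotc c (\sum_(k <= j < k'.+1) V j) = rt k * \sum_(k <= j < k'.+1) norm1 (V j).
  rewrite dotc_sum -sumrN mulr_sumr; apply: eq_big_nat => j hj; exact: Vdir.
have KEY := key (c := c) (r := rt k) (feas_all hx0 hsteps (ltnW hk)) fy (steep hsteps hk).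
rewrite /G sumV dsum in KEY.
have tri : \sum_(k <= j < k'.+1) norm1 (V j) <= norm1 (\sum_(k <= j < k'.+1) V j).
  by move: KEY; rewrite ler_pM2l // (rt_pos hsteps).
have eqi := tri_eq tri i.
have yi : (x k' + eps *: G k') i 0 = x k.+1 i 0 + \sum_(k.+1 <= j < k'.+1) V j i 0.
  have -> : x k' + eps *: G k' = x k + (x k' + eps *: G k' - x k) by rewrite [RHS]addrC subrK.
  have kl : (k < k'.+1)%N by apply: (leq_trans lt); apply: leqnSn.
  rewrite sumV mxE summxE (big_ltn kl) addrA; congr (_ + _).
  have -> : V k i 0 = x k.+1 i 0 - x k i 0 by rewrite /V lt !mxE.
  by rewrite [LHS]addrC subrK.
have Vk : V k i 0 = al k * G k i 0 by rewrite /V lt (xS hsteps hk) addrC addKr !mxE.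
have kin : k \in index_iota k k'.+1 by rewrite mem_index_iota leqnn ltnS ltnW.
have sub : forall j, j \in index_iota k.+1 k'.+1 -> j \in index_iota k k'.+1.
  by move=> j; rewrite !mem_index_iota => /andP [h1 h2]; rewrite h2 ltnW.
have k'in : k' \in index_iota k.+1 k'.+1 by rewrite mem_index_iota lt ltnSn.
have Vk' : V k' i 0 = eps * G k' i 0 by rewrite /V ltnn !mxE.
have yb : 0 <= (x k' + eps *: G k') i 0 <= (u i 0)%:~R by case: fy => _ /(_ i).
have alp := al_pos hsteps hk.
case: hcase => [[gp xu]|[gn x0]].
  have pos := sign_all kin _ eqi.
  rewrite Vk pmulr_rgt0 // in pos; have {}pos := pos gp.
  have := @psum_seq_eq0 R (index_iota k.+1 k'.+1) (fun j => V j i 0).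
  move=> /(_ (fun j jin => pos j (sub j jin))).
  move: yb; rewrite yi xu => /andP [_ le]; rewrite gerDl in le.
  move=> /(_ le k' k'in); rewrite Vk' => /eqP; rewrite mulf_eq0 gt_eqF //= => /eqP //.
have eqi' : `|\sum_(k <= j < k'.+1) (fun j => - V j i 0) j| =
            \sum_(k <= j < k'.+1) `|(fun j => - V j i 0) j|.
  by rewrite sumrN normrN eqi; apply: eq_bigr => j _; rewrite normrN.
have pos := sign_all kin _ eqi'.
rewrite /= Vk -mulrN pmulr_rgt0 // oppr_gt0 in pos; have {}pos := pos gn.
have := @psum_seq_eq0 R (index_iota k.+1 k'.+1) (fun j => - V j i 0).
move=> /(_ (fun j jin => pos j (sub j jin))).
move: yb; rewrite yi x0 add0r => /andP [ge _].
rewrite sumrN oppr_le0 => /(_ ge k' k'in) /eqP; rewrite oppr_eq0 Vk' mulf_eq0 gt_eqF //= => /eqP //.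
Qed.

End Main3.

Unset Implicit Arguments.

Theorem corollary2 (R : realFieldType) (d n : nat)
  (A : 'M[int]_(d, n)) (b : 'cV[int]_d) (c u : 'cV[int]_n)
  (hu : forall i : 'I_n, 0 <= u i 0)
  (m : nat) (vals : seq R)
  (hvals_uniq : uniq vals) (hvals_size : size vals = m)
  (hvals : forall q : R, q \in vals <->
             (0 < q /\ exists z, is_circuit R A z /\ q = sd_ratio R c z))
  (x : nat -> 'cV[R]_n) (K : nat)
  (hx0 : feasible A b u (x 0%N))
  (hsteps : forall k, (k < K)%N -> sd_step A b c u (x k) (x k.+1)) :
  (K <= n * m)%N /\ (sd_stops A b c u (x K) -> optimal A b c u (x K)).
Proof.
split; last first.
  move=> stops; have fK := feas_all hx0 hsteps (leqnn K); split => // y fy.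
  have := key (c := c) (r := 0) fK fy stops.
  by rewrite mul0r dotcB opprB subr_le0.
have inv : forall k : 'I_K, rt hsteps k \in vals.
  move=> k; apply/hvals; split; first exact: rt_pos (ltn_ord k).
  by exists (zs hsteps k); split => //; exact: circ (ltn_ord k).
have idxP : forall k : 'I_K, (index (rt hsteps k) vals < m)%N.
  by move=> k; rewrite -hvals_size index_mem.
pose hitc (k : 'I_K) : 'I_n :=
  proj1_sig (constructive_indefinite_description _ (hit hx0 hsteps (ltn_ord k))).
have hitcP : forall k : 'I_K, hitp hsteps k (hitc k).
  by move=> k; rewrite /hitc; case: constructive_indefinite_description.
pose f (k : 'I_K) : 'I_m * 'I_n := (Ordinal (idxP k), hitc k).
have finj : injective f.
  move=> k1 k2 [e1 e2].
  have er : rt hsteps k1 = rt hsteps k2.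
    by rewrite -(nth_index 0 (inv k1)) e1 (nth_index 0 (inv k2)).
  have G2 := hitcP k2; have G1 := hitcP k1.
  case: (ltngtP k1 k2) => [lt|lt|eq]; last exact: val_inj.
    have := block hx0 lt (ltn_ord k2) er G1.
    by case: G2 => nz _; move: nz; rewrite -e2 => /eqP.
  have := block hx0 lt (ltn_ord k1) (esym er) G2.
  by case: G1 => nz _; move: nz; rewrite e2 => /eqP.
by have := leq_card f finj; rewrite card_prod !card_ord mulnC.
Qed.
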